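(* Let $p,q$ be odd primes, $m\in\mathbb{N}$ and $k\in\{0,1,\dots,m\}$. Suppose there exist $u,v\in\mathbb{Z}$ with $\gcd(u,v)=1$ such that either $$u+\delta_4 v=q^k \text{ and } H_p(u,v)=q^{m-k},$$ or $$u+\delta_4 v=-q^k \text{ and } H_p(u,v)=-q^{m-k}.$$ Then $k=0$, or ($k=m$ and $p\ne q$), or ($k=m-1$ and $p=q$).
   Context: For an odd prime $p$ put $\delta_4=1$ if $p\equiv 1\pmod 4$, $\delta_4=-1$ if $p\equiv 3\pmod 4$. Let $G_p(u,v)=\mathrm{Im}\big((1+i)(u+iv)^p\big)\in\mathbb{Z}[u,v]$ (for real $u,v$); $u+\delta_4 v$ divides $G_p$ in $\mathbb{Z}[u,v]$, and $H_p(u,v):=G_p(u,v)/(u+\delta_4 v)\in\mathbb{Z}[u,v]$. $\mathbb{N}$ denotes the positive integers. *)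

(* Defs.v *)
From mathcomp Require Import all_boot all_order all_algebra.
Set Implicit Arguments. Unset Strict Implicit. Unset Printing Implicit Defensive.
Import Order.TTheory GRing.Theory Num.Theory.
Local Open Scope ring_scope.

(* Gaussian integers x + i y represented as pairs (x, y) of integers. *)
Definition gmul (z w : int * int) : int * int :=
  (z.1 * w.1 - z.2 * w.2, z.1 * w.2 + z.2 * w.1).

Definition gpow (z : int * int) (n : nat) : int * int :=
  iter n (gmul z) (1, 0).

Definition delta4 (p : nat) : int := if (p %% 4 == 1)%N then 1 else -1.

(* G_p(u,v) = Im((1+i)(u+iv)^p); for (u+iv)^p = x + i y this is x + y. *)
Definition Gp (p : nat) (u v : int) : int :=
  let w := gmul (1, 1) (gpow (u, v) p) in w.2.

(* H_p(u,v) = G_p(u,v) / (u + delta_4 v); the polynomial quotient is exact,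
   so its value at integers with u + delta_4 v <> 0 is the exact integer
   quotient below. *)
Definition Hp (p : nat) (u v : int) : int :=
  (Gp p u v %/ (u + delta4 p * v))%Z.

(* Main.v *)
From HB Require Import structures.
Require Import Defs.
From mathcomp Require Import all_boot all_order all_algebra.
From mathcomp Require Import ring lra zify.
Set Implicit Arguments. Unset Strict Implicit. Unset Printing Implicit Defensive.
Import Order.TTheory GRing.Theory Num.Theory.
Local Open Scope ring_scope.

Definition GI := (int * int)%type.
HB.instance Definition _ := Choice.on GI.
Definition gadd (z w : GI) : GI := (z.1 + w.1, z.2 + w.2).
Definition gopp (z : GI) : GI := (- z.1, - z.2).
Definition gzero : GI := (0, 0).
Lemma gaddA : associative gadd.
Proof. by move=> [a b] [c d] [e f]; rewrite /gadd /= !addrA. Qed.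
Lemma gaddC : commutative gadd.
Proof. by move=> [a b] [c d]; rewrite /gadd /= addrC (addrC b). Qed.
Lemma gadd0 : left_id gzero gadd.
Proof. by move=> [a b]; rewrite /gadd /= !add0r. Qed.
Lemma gaddN : left_inverse gzero gopp gadd.
Proof. by move=> [a b]; rewrite /gadd /= !addNr. Qed.
HB.instance Definition _ := GRing.isZmodule.Build GI gaddA gaddC gadd0 gaddN.
Definition gone : GI := (1, 0).
Lemma gmulA : associative (gmul : GI -> GI -> GI).
Proof. move=> [a b] [c d] [e f]; rewrite /gmul /=; congr pair; ring. Qed.
Lemma gmulC : commutative (gmul : GI -> GI -> GI).
Proof. move=> [a b] [c d]; rewrite /gmul /=; congr pair; ring. Qed.
Lemma gmul1 : left_id gone (gmul : GI -> GI -> GI).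
Proof. move=> [a b]; rewrite /gmul /=; congr pair; ring. Qed.
Lemma gmulD : left_distributive (gmul : GI -> GI -> GI) gadd.
Proof. move=> [a b] [c d] [e f]; rewrite /gmul /gadd /=; congr pair; ring. Qed.
Lemma gone_neq0 : gone != (gzero : GI).
Proof. by []. Qed.
HB.instance Definition _ := GRing.Zmodule_isComNzRing.Build GI gmulA gmulC gmul1 gmulD gone_neq0.

Lemma gpowE (z : GI) n : gpow z n = z ^+ n.
Proof. elim: n => [|n IH] //=; by rewrite IH exprS. Qed.
Lemma fst_add (z w : GI) : (z + w).1 = z.1 + w.1. Proof. by []. Qed.
Lemma snd_add (z w : GI) : (z + w).2 = z.2 + w.2. Proof. by []. Qed.
Lemma snd_mul (z w : GI) : (z * w).2 = z.1 * w.2 + z.2 * w.1. Proof. by []. Qed.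
Lemma fst_mul (z w : GI) : (z * w).1 = z.1 * w.1 - z.2 * w.2. Proof. by []. Qed.

Lemma snd_sum n (F : 'I_n -> GI) : (\sum_(i < n) F i).2 = \sum_(i < n) (F i).2.
Proof.
elim: n F => [|n IH] F; first by rewrite !big_ord0.
by rewrite !big_ord_recr /= -IH.
Qed.
Lemma snd_muln (z : GI) k : (z *+ k).2 = z.2 *+ k.
Proof. elim: k => [|k IH] //; by rewrite !mulrS -IH. Qed.
Lemma realX (x : int) k : ((x, 0) : GI) ^+ k = (x ^+ k, 0).
Proof.
elim: k => [|k IH] //; rewrite !exprS IH.
change (gmul (x, 0) (x ^+ k, 0) = (x * x ^+ k, 0)).
rewrite /gmul /=; congr pair; ring.
Qed.
Lemma snd_real (z : GI) x : (z * (x, 0)).2 = z.2 * x.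
Proof. by rewrite snd_mul /=; ring. Qed.

Definition ga (d : int) : GI := (- d, 1).
Definition ge : GI := (1, 1).
Definition cc d j := (ge * ga d ^+ j).2.

Lemma decomp d u v : ((u, v) : GI) = ga d * (v, 0) + (u + d * v, 0).
Proof. change ((u, v) = gadd (gmul (ga d) (v, 0)) (u + d * v, 0)).
rewrite /gadd /gmul /=; congr pair; ring. Qed.

Lemma Gp_expand p u v :
  Gp p u v = \sum_(i < p.+1) (cc (delta4 p) (p - i) * v ^+ (p - i) * (u + delta4 p * v) ^+ i) *+ 'C(p, i).
Proof.
rewrite /Gp gpowE.
have -> : gmul (1, 1) (((u, v) : GI) ^+ p) = ge * ((u, v) : GI) ^+ p by [].
rewrite (decomp (delta4 p)) exprDn mulr_sumr snd_sum; apply: eq_bigr => i _.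
rewrite mulrnAr snd_muln exprMn !realX /cc; congr (_ *+ _).
by rewrite !mulrA snd_real -(snd_real (ge * _)).
Qed.

Definition Rt d n (v t : int) := \sum_(i < n) (cc d (n - i.+1) * v ^+ (n - i.+1) * t ^+ i) *+ 'C(n.+1, i.+2).

Lemma aux_mul (a b t x : int) y : a * b * (t * (t * x)) *+ y = t * (t * (a * b * x *+ y)).
Proof. rewrite !mulrnAr; congr (_ *+ _); ring. Qed.

Lemma Gp_split n u v :
  cc (delta4 n.+1) n.+1 = 0 ->
  Gp n.+1 u v = (u + delta4 n.+1 * v) * ((n.+1)%:Z * (cc (delta4 n.+1) n * v ^+ n)
       + (u + delta4 n.+1 * v) * Rt (delta4 n.+1) n v (u + delta4 n.+1 * v)).
Proof.
move=> c0; rewrite Gp_expand big_ord_recl big_ord_recl /Rt.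
move: (u + delta4 n.+1 * v) (cc (delta4 n.+1)) c0 => t c c0.
rewrite !lift0 subn0 c0 !mul0r mul0rn add0r.
rewrite mulrDr; congr (_ + _).
  by rewrite subSS subn0 bin1 expr1 -mulr_natl; ring.
rewrite !big_distrr; apply: eq_bigr => i _. rewrite !lift0 !exprS subSS.
exact: aux_mul.
Qed.

Lemma Rt_dvd d n v t : prime n.+1 -> (1 < n)%N -> ((n.+1)%:Z %| t)%Z ->
  ((n.+1)%:Z %| Rt d n v t)%Z.
Proof.
move=> pp n1 pt; rewrite /Rt; apply: rpred_sum => i _.
case: (ltnP i.+1 n) => hi.
  rewrite -mulr_natr dvdz_mull // dvdzE /=.
  have -> : `|('C(n.+1, i.+2))%:R : int|%N = 'C(n.+1, i.+2) by rewrite natz.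
  by apply: prime_dvd_bin => //; rewrite /= ltnS hi.
apply: rpredMn; apply: dvdz_mull; apply: dvdz_exp pt.
have := ltn_ord i; clear -hi n1; lia.
Qed.

Lemma ga4 d : d * d = 1 -> ga d ^+ 4 = (-4, 0).
Proof.
move=> h.
have e2 : ga d ^+ 2 = (0, -2 * d).
  rewrite expr2; change (gmul (ga d) (ga d) = (0, -2 * d)); rewrite /gmul /=.
  by congr pair; [rewrite mulrNN h; ring | ring].
have -> : (4 = 2 * 2)%N by [].
rewrite exprM e2 expr2; change (gmul (0, -2 * d) (0, -2 * d) = (-4, 0)); rewrite /gmul /=.
congr pair; last by ring.
by rewrite mulrACA h; ring.
Qed.

Lemma cc_shift d r j : d * d = 1 -> cc d (4 * r + j) = cc d j * (-4) ^+ r.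
Proof.
move=> h; rewrite /cc exprD exprM ga4 // realX.
by rewrite (mulrC _ (ga d ^+ j)) mulrA snd_real.
Qed.

Lemma cc10 : cc 1 0 = 1. Proof. by []. Qed.
Lemma cc11 : cc 1 1 = 0. Proof. by []. Qed.
Lemma cc12 : cc (-1) 2 = 2. Proof. by []. Qed.
Lemma cc13 : cc (-1) 3 = 0. Proof. by []. Qed.

Lemma zprime_mul (q : nat) (x y : int) : prime q ->
  (q%:Z %| x * y)%Z -> (q%:Z %| x)%Z || (q%:Z %| y)%Z.
Proof. by move=> pq; rewrite !dvdzE abszM /= Euclid_dvdM. Qed.

Lemma zprime_X (q : nat) (x : int) n : prime q ->
  (q%:Z %| x ^+ n)%Z -> (q%:Z %| x)%Z.
Proof. by move=> pq; rewrite !dvdzE abszX /= Euclid_dvdX // => /andP[]. Qed.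

Lemma not_dvd_pow2 (q : nat) (c : int) s : prime q -> odd q -> `|c|%N = (2 ^ s)%N ->
  ~~ (q%:Z %| c)%Z.
Proof.
move=> pq oq hc; rewrite dvdzE hc /= Euclid_dvdX //; apply/negP => /andP[h _].
have := dvdn_leq (isT : (0 < 2)%N) h; have := prime_gt1 pq.
by case: q pq oq h => [|[|[|q]]].
Qed.

Lemma core (p q m k n : nat) (u v d c S t R : int) :
  prime p -> prime q -> (k <= m)%N -> gcdz u v = 1%N ->
  t = u + d * v -> `|t|%N = (q ^ k)%N -> `|S|%N = (q ^ (m - k))%N ->
  S = p%:Z * (c * v ^+ n) + t * R ->
  ~~ (q%:Z %| c)%Z -> ~~ (p%:Z %| c)%Z -> ((p%:Z %| t)%Z -> (p%:Z %| R)%Z) ->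
  k = 0%N \/ (k = m /\ p <> q) \/ (k.+1 = m /\ p = q).
Proof.
move=> pp pq km g ht hta aS eS cq cp hR.
case k0: k => [|k']; [by left | right].
have qt : (q%:Z %| t)%Z by rewrite dvdzE hta /= k0 dvdn_exp.
have nv : ~~ (q%:Z %| v)%Z.
  apply/negP => qv.
  have qu : (q%:Z %| u)%Z.
    have -> : u = t - d * v by rewrite ht; ring.
    by rewrite rpredB // dvdz_mull.
  have : (q%:Z %| gcdz u v)%Z by rewrite dvdz_gcd qu qv.
  by rewrite g dvdz1 /= => /eqP q1; move: pq; rewrite q1.
have nX : ~~ (q%:Z %| c * v ^+ n)%Z.
  apply/negP => /(zprime_mul pq) /orP[]; first by apply/negP.
  by move/(zprime_X pq); apply/negP.
have tR : (q%:Z %| t * R)%Z by rewrite dvdz_mulr.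
case mk: (m - k)%N => [|j].
  left; split; first by clear -km mk k0; lia.
  move=> epq; subst p.
  have : (q%:Z %| S)%Z by rewrite eS rpredD // dvdz_mulr.
  by rewrite dvdzE aS mk /= dvdn1 => /eqP q1; move: pq; rewrite q1.
have qS : (q%:Z %| S)%Z by rewrite dvdzE aS mk /= dvdn_exp.
have qpX : (q%:Z %| p%:Z * (c * v ^+ n))%Z.
  have -> : p%:Z * (c * v ^+ n) = S - t * R by rewrite eS; ring.
  by rewrite rpredB.
have qp : q = p.
  move: (zprime_mul pq qpX); rewrite (negbTE nX) orbF dvdzE /=.
  by rewrite dvdn_prime2 // => /eqP.
subst p; right; split => //.
case: j mk => [|j] mk; first by clear -km mk k0; lia.
have hR' := hR qt.
have q2S : (q%:Z * q%:Z %| S)%Z.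
  rewrite dvdzE abszM aS mk /= mulnn dvdn_exp2l //.
have q2tR : (q%:Z * q%:Z %| t * R)%Z by rewrite dvdz_mul.
have : (q%:Z * q%:Z %| q%:Z * (c * v ^+ n))%Z.
  have -> : q%:Z * (c * v ^+ n) = S - t * R by rewrite eS; ring.
  by rewrite rpredB.
rewrite dvdz_mul2l; last by apply/eqP => -[q0]; move: pq; rewrite q0.
by rewrite (negbTE nX).
Qed.

Lemma cc_facts p : prime p -> odd p -> exists n s, [/\ p = n.+1, (1 < n)%N,
  delta4 p * delta4 p = 1, cc (delta4 p) n.+1 = 0 & `|cc (delta4 p) n|%N = (2 ^ s)%N].
Proof.
move=> pp op.
have h4 : (p %% 4 < 4)%N by rewrite ltn_pmod.
have p3 : (2 < p)%N.
  have := prime_gt1 pp; case: p pp op {h4} => [|[|[|]]] //.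
have ep := divn_eq p 4.
move: op; rewrite {1}ep oddD oddM andbF /=.
case e: (p %% 4)%N h4 => [|[|[|[|]]]] // _ _.
- exists (4 * (p %/ 4))%N, (2 * (p %/ 4))%N.
  have d1 : delta4 p = 1 by rewrite /delta4 e.
  rewrite d1; split.
  + clear -ep e; lia.
  + clear -p3 ep e; lia.
  + by [].
  + by rewrite -addn1 cc_shift // cc11 mul0r.
  + by rewrite -[X in cc _ X]addn0 cc_shift // cc10 mul1r abszX /= expnM.
- exists (4 * (p %/ 4) + 2)%N, (2 * (p %/ 4) + 1)%N.
  have d1 : delta4 p = -1 by rewrite /delta4 e.
  rewrite d1; split.
  + clear -ep e; lia.
  + clear -p3 ep e; lia.
  + by [].
  + by rewrite -addnS cc_shift // cc13 mul0r.
  + by rewrite cc_shift // cc12 abszM abszX /= expnD expnM mulnC.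
Qed.

Theorem lemma6 (p q m k : nat) (u v : int) :
  prime p -> odd p -> prime q -> odd q -> (0 < m)%N -> (k <= m)%N ->
  gcdz u v = 1%N ->
  ((u + delta4 p * v = (q ^ k)%:Z /\ Hp p u v = (q ^ (m - k))%:Z) \/
   (u + delta4 p * v = - (q ^ k)%:Z /\ Hp p u v = - (q ^ (m - k))%:Z)) ->
  k = 0%N \/ (k = m /\ p <> q) \/ (k.+1 = m /\ p = q).
Proof.
move=> pp op pq oq m0 km g h.
have [n [s [pn n1 dd c0 cs]]] := cc_facts pp op.
have [hta aS] : absz (u + delta4 p * v) = (q ^ k)%N /\ absz (Hp p u v) = (q ^ (m - k))%N.
  by case: h => -[-> ->]; rewrite ?abszN.
have t0 : u + delta4 p * v != 0.
  apply/eqP => t0; move: hta; rewrite t0 /= => /esym/eqP; rewrite expn_eq0.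
  by case/andP => /eqP q0; move: pq; rewrite q0.
have eS : Hp p u v = p%:Z * (cc (delta4 p) n * v ^+ n)
    + (u + delta4 p * v) * Rt (delta4 p) n v (u + delta4 p * v).
  rewrite /Hp; subst p; rewrite Gp_split // mulKz //.
apply: (@core p q m k n u v (delta4 p) (cc (delta4 p) n) _ _ _ pp pq km g erefl hta aS eS).
- exact: not_dvd_pow2 pq oq cs.
- exact: not_dvd_pow2 pp op cs.
- by subst p; apply: Rt_dvd.
Qed.
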